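(* Let $a_1,a_2\in D$ be nonzero pure quaternions with $|2a_1|\ge|a_2|$ and $N(a_2)\in N(a_1)k^{*2}$, and let $t$ be the integer with $\nu(\pi^t)=\nu(a_2)-\nu(a_1)$. Say that $r\in\mathcal{O}_D$ satisfies the $k$-star conditions if $\left(\frac{N(1-r),\,-N(a_1)}{\mathfrak{p}}\right)=-1$, $N(z)N(a_1)\in k^{*2}$ and $N(z)N(\pi^ta_1)^{-1}\in\mathcal{O}_k$, where $z=a_1-ra_1\bar r$. Let $e$ be the ramification index of $k/\mathbb{Q}_2$, $u=t+6e$, and let $\mathcal{S}\subseteq\mathcal{O}_k$ be any finite set of representatives of $\mathcal{O}_k/\pi^u\mathcal{O}_k$. Then there exists $r\in\mathcal{O}_D$ satisfying the $k$-star conditions if and only if there exists $\alpha\in\mathcal{S}\oplus\mathcal{S}\omega\oplus\mathcal{S}i\oplus\mathcal{S}i\omega\subseteq\mathcal{O}_D$ satisfying them.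
   Context: $k$ is a dyadic local field of characteristic $0$, $\mathcal{O}_k$ its integers, $\pi$ a uniformizer, $\nu_k$ its normalized valuation, $\left(\frac{x,y}{\mathfrak{p}}\right)$ the Hilbert symbol of $k$. $\Delta\in\mathcal{O}_k^*$ is a unit of minimal quadratic defect ($\Delta=1+4\delta$, $\delta\in\mathcal{O}_k^*$). $D=\left(\frac{\pi,\Delta}{k}\right)$ is the quaternion division algebra with basis $1,i,j,ij$, $i^2=\pi$, $j^2=\Delta$, $ij=-ji$; $\omega=(1+j)/2$. $N$ is the reduced norm, $q\mapsto\bar q$ the canonical involution, $|q|:=|N(q)|_k$, $\nu(q):=\nu_k(N(q))$, and $\mathcal{O}_D=\{q:|q|\le1\}=\mathcal{O}_k\oplus\mathcal{O}_k\omega\oplus\mathcal{O}_ki\oplus\mathcal{O}_ki\omega$. *)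

(* Defs.v *)
From HB Require Import structures.
From mathcomp Require Import all_boot all_order all_algebra.
Set Implicit Arguments. Unset Strict Implicit. Unset Printing Implicit Defensive.
Import Order.TTheory GRing.Theory Num.Theory.
Local Open Scope ring_scope.

(* normalized discrete valuation  v : k -> int  (value at 0 irrelevant) *)

Definition in_Ok (k : fieldType) (v : k -> int) (x : k) : Prop :=
  x = 0 \/ 0 <= v x.

Definition is_dyadic_local_field (k : fieldType) (v : k -> int) : Prop :=
  [pchar k] =i pred0 /\
  (forall x y : k, x != 0 -> y != 0 -> v (x * y) = v x + v y) /\
  (forall x y : k, x != 0 -> y != 0 -> x + y != 0 ->
      Num.min (v x) (v y) <= v (x + y)) /\
  (exists p : k, p != 0 /\ v p = 1) /\
  (forall u : nat -> k,
      (forall M : int, exists N : nat, forall m n : nat, (N <= m)%N -> (N <= n)%N ->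
           u m = u n \/ M <= v (u m - u n)) ->
      exists l : k, forall M : int, exists N : nat, forall n : nat, (N <= n)%N ->
           u n = l \/ M <= v (u n - l)) /\
  (* finite residue field *)
  (exists R : seq k, forall x : k, in_Ok v x ->
      exists2 r, r \in R & (x = r \/ 1 <= v (x - r))) /\
  (* dyadic: residue characteristic 2 *)
  0 < v 2.

Definition is_square_nz (k : fieldType) (x : k) : Prop :=
  exists c : k, c != 0 /\ x = c ^+ 2.

(* Hilbert symbol (a,b / p) = -1 : the form a X^2 + b Y^2 - Z^2 is
   anisotropic. *)
Definition hilbert_neg1 (k : fieldType) (a b : k) : Prop :=
  forall x y z : k, z ^+ 2 = a * x ^+ 2 + b * y ^+ 2 -> x = 0 /\ y = 0 /\ z = 0.

(* The quaternion algebra (a, b / k) with basis 1, i, j, ij            *)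

Record quat (k : Type) := Quat { q0 : k; q1 : k; q2 : k; q3 : k }.

Section Quat.
Variables (k : fieldType) (a b : k).

Definition qadd (x y : quat k) : quat k :=
  Quat (q0 x + q0 y) (q1 x + q1 y) (q2 x + q2 y) (q3 x + q3 y).
Definition qopp (x : quat k) : quat k := Quat (- q0 x) (- q1 x) (- q2 x) (- q3 x).
Definition qsub (x y : quat k) : quat k := qadd x (qopp y).
Definition qscale (c : k) (x : quat k) : quat k :=
  Quat (c * q0 x) (c * q1 x) (c * q2 x) (c * q3 x).
Definition qone : quat k := Quat 1 0 0 0.
(* multiplication with i^2 = a, j^2 = b, ij = - ji *)
Definition qmul (x y : quat k) : quat k :=
  Quat (q0 x * q0 y + a * q1 x * q1 y + b * q2 x * q2 y - a * b * q3 x * q3 y)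
       (q0 x * q1 y + q1 x * q0 y - b * q2 x * q3 y + b * q3 x * q2 y)
       (q0 x * q2 y + q2 x * q0 y + a * q1 x * q3 y - a * q3 x * q1 y)
       (q0 x * q3 y + q3 x * q0 y + q1 x * q2 y - q2 x * q1 y).
Definition qconj (x : quat k) : quat k := Quat (q0 x) (- q1 x) (- q2 x) (- q3 x).
Definition qnorm (x : quat k) : k :=
  q0 x ^+ 2 - a * q1 x ^+ 2 - b * q2 x ^+ 2 + a * b * q3 x ^+ 2.
Definition qpure (x : quat k) : Prop := q0 x = 0.
End Quat.
Arguments qone {k}.

Definition qi (k : fieldType) : quat k := Quat 0 1 0 0.
Definition qj (k : fieldType) : quat k := Quat 0 0 1 0.
Definition qomega (k : fieldType) : quat k := Quat (2^-1) 0 (2^-1) 0.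

Definition in_OD (k : fieldType) (v : k -> int) (pi Delta : k) (q : quat k) : Prop :=
  in_Ok v (qnorm pi Delta q).

Definition qval (k : fieldType) (v : k -> int) (pi Delta : k) (q : quat k) : int :=
  v (qnorm pi Delta q).

Definition kstar (k : fieldType) (v : k -> int) (pi Delta : k)
    (a1 : quat k) (t : int) (r : quat k) : Prop :=
  let z := qsub a1 (qmul pi Delta (qmul pi Delta r a1) (qconj r)) in
  hilbert_neg1 (qnorm pi Delta (qsub qone r)) (- qnorm pi Delta a1) /\
  is_square_nz (qnorm pi Delta z * qnorm pi Delta a1) /\
  in_Ok v (qnorm pi Delta z * (qnorm pi Delta (qscale (pi ^ t) a1))^-1).

Definition lattice_elt (k : fieldType) (pi Delta : k) (s0 s1 s2 s3 : k) : quat k :=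
  qadd (qadd (qscale s0 qone) (qscale s1 (qomega k)))
       (qadd (qscale s2 (qi k)) (qscale s3 (qmul pi Delta (qi k) (qomega k)))).

Definition reps_mod (k : fieldType) (v : k -> int) (pi : k) (u : int) (S : seq k) : Prop :=
  (forall s, s \in S -> in_Ok v s) /\
  (forall x, in_Ok v x -> exists s, s \in S /\ (exists y, in_Ok v y /\ x - s = pi ^ u * y) /\
       forall s', s' \in S -> (exists y, in_Ok v y /\ x - s' = pi ^ u * y) -> s' = s).

(* Main.v *)
Require Import Defs.
From HB Require Import structures.
From mathcomp Require Import all_boot all_order all_algebra.
From mathcomp Require Import zify ring lra.
Import Order.TTheory GRing.Theory Num.Theory.
Local Open Scope ring_scope.
Set Implicit Arguments. Unset Strict Implicit. Unset Printing Implicit Defensive.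

Ltac prune := repeat match goal with
  | H : ?T |- _ => lazymatch T with
       | is_true (@Order.le _ _ _ _) => fail
       | is_true (@Order.lt _ _ _ _) => fail
       | @eq int _ _ => fail
       | _ => clear H
     end
  end.

Section Val.
Variable k : fieldType.
Variable v : k -> int.
Ltac vlia := prune; repeat match goal with H : is_true _ |- _ => revert H | H : @eq int _ _ |- _ => revert H end;
  (try set e2 := v 2); intros; lia.
Hypothesis vM : forall x y : k, x != 0 -> y != 0 -> v (x * y) = v x + v y.
Hypothesis vA : forall x y : k, x != 0 -> y != 0 -> x + y != 0 ->
      Num.min (v x) (v y) <= v (x + y).

Definition vge (n : int) (x : k) : Prop := x = 0 \/ n <= v x.

Lemma v1 : v 1 = 0.
Proof.
have o : (1:k) != 0 := oner_neq0 k.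
have h : v (1 * 1) = v 1 + v 1 := vM o o.
rewrite mulr1 in h. lia. Qed.

Lemma vN x : x != 0 -> v (- x) = v x.
Proof.
move=> x0.
have m1 : (-1 : k) != 0 by rewrite oppr_eq0 oner_neq0.
have h := vM m1 m1. rewrite mulrNN mulr1 v1 in h.
have h2 : v (-1) = 0 by lia.
by rewrite -mulN1r vM // h2 add0r.
Qed.

Lemma vV x : x != 0 -> v (x^-1) = - v x.
Proof.
move=> x0. have := vM x0 (invr_neq0 x0). rewrite mulfV // v1. lia.
Qed.

Lemma vge_le n m x : n <= m -> vge m x -> vge n x.
Proof. move=> h [->|h2]; [by left|right; lia]. Qed.

Lemma ge0 n : vge n 0.
Proof. by left. Qed.

Lemma gev x : vge (v x) x.
Proof. by right. Qed.

Lemma vge_add n x y : vge n x -> vge n y -> vge n (x + y).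
Proof.
move=> [->|hx]; first by rewrite add0r.
move=> [->|hy]; first by rewrite addr0; right.
have [->|x0] := eqVneq x 0; first by rewrite add0r; right.
have [->|y0] := eqVneq y 0; first by rewrite addr0; right.
have [->|s0] := eqVneq (x + y) 0; first by left.
right. have := vA x0 y0 s0. lia.
Qed.

Lemma vge_opp n x : vge n x -> vge n (- x).
Proof.
move=> [->|h]; first by rewrite oppr0; left.
have [->|x0] := eqVneq x 0; first by rewrite oppr0; left.
by right; rewrite vN.
Qed.

Lemma vge_sub n x y : vge n x -> vge n y -> vge n (x - y).
Proof. by move=> hx hy; apply: vge_add => //; apply: vge_opp. Qed.

Lemma vge_mul n m x y : vge n x -> vge m y -> vge (n + m) (x * y).
Proof.
move=> [->|hx]; first by rewrite mul0r; left.
move=> [->|hy]; first by rewrite mulr0; left.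
have [->|x0] := eqVneq x 0; first by rewrite mul0r; left.
have [->|y0] := eqVneq y 0; first by rewrite mulr0; left.
right; rewrite vM //; lia.
Qed.

Lemma vge_nz n x : vge n x -> x != 0 -> n <= v x.
Proof. by move=> [->|//]; rewrite eqxx. Qed.

Lemma vge_div n x c : c != 0 -> vge n (x * c) -> vge (n - v c) x.
Proof.
move=> c0 h. have := vge_mul h (gev (c^-1)).
rewrite -mulrA mulfV // mulr1 vV //.
Qed.

Lemma vge_mulc n x c : c != 0 -> vge n x -> vge (n + v c) (x * c).
Proof. move=> c0 h; exact: vge_mul h (gev c). Qed.

Lemma vge_all x : (forall n, vge n x) -> x = 0.
Proof.
move=> h. case: (h (v x + 1)) => // h2. lia.
Qed.

Lemma unit1 y : vge 1 y -> 1 + y != 0 /\ v (1 + y) = 0.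
Proof.
move=> hy.
have nz : 1 + y != 0.
  apply/eqP=> h. have : y = -1 by apply/eqP; rewrite -subr_eq0 opprK addrC h.
  move=> yE. case: hy; rewrite yE; first by move/eqP; rewrite oppr_eq0 oner_eq0.
  rewrite vN ?oner_neq0 // v1; lia.
split => //.
have [->|y0] := eqVneq y 0; first by rewrite addr0 v1.
have g1 : vge 0 (1 + y) by apply: vge_add; [right; rewrite v1|apply: vge_le hy].
have g0 := vge_nz g1 nz.
have h : vge (Num.min 1 (v (1 + y))) ((1 + y) - y).
  apply: vge_sub; [apply: (vge_le _ (gev _)); lia | apply: (vge_le _ hy); lia].
rewrite addrK in h.
have := vge_nz h (oner_neq0 k). rewrite v1. lia.
Qed.

Lemma vdom x y : x != 0 -> vge (v x + 1) y -> x + y != 0 /\ v (x + y) = v x.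
Proof.
move=> x0 hy.
have e : x + y = x * (1 + y / x) by rewrite mulrDr mulr1 mulrCA mulfV ?mulr1.
have h1 : vge 1 (y / x).
  have := vge_mul hy (gev x^-1). rewrite vV //. apply: vge_le; lia.
have [nz vz] := unit1 h1.
rewrite e mulf_neq0 //; split => //. rewrite vM // vz; lia.
Qed.


Hypothesis vC : forall u : nat -> k,
      (forall M : int, exists N : nat, forall m n : nat, (N <= m)%N -> (N <= n)%N ->
           u m = u n \/ M <= v (u m - u n)) ->
      exists l : k, forall M : int, exists N : nat, forall n : nat, (N <= n)%N ->
           u n = l \/ M <= v (u n - l).
Hypothesis v2pos : 0 < v 2.
Hypothesis two0 : (2:k) != 0.

Definition hg (c w : k) := w ^+ 2 + w - c.

Lemma vge_2 : vge 1 2.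
Proof. right; lia. Qed.

Lemma unit_2w1 w : vge 0 w -> 2 * w + 1 != 0 /\ v (2 * w + 1) = 0.
Proof.
move=> hw. have h : vge 1 (2 * w) by have := vge_mul vge_2 hw; rewrite addr0.
by have := unit1 h; rewrite addrC.
Qed.

Lemma hstep c w (n : int) : 1 <= n -> vge 0 c -> vge 0 w -> vge n (hg c w) ->
  let h := hg c w / (2 * w + 1) in
  [/\ vge 0 (w - h), vge (2 * n) (hg c (w - h)) & vge n h].
Proof.
move=> n1 hc hw hgw h.
have [D0 vD] := unit_2w1 hw.
have hh : vge n h.
  have e : h * (2 * w + 1) = hg c w by rewrite /h mulfVK.
  have := vge_div D0 (eq_ind_r (fun z => vge n z) hgw e).
  by rewrite vD subr0.
have e2 : hg c (w - h) = h * h.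
  rewrite /h /hg. field. exact: D0.
split => //.
- apply: vge_sub => //. apply: (vge_le _ hh); lia.
- rewrite e2. apply: (vge_le _ (vge_mul hh hh)); lia.
Qed.

Fixpoint wseq (c w0 : k) (n : nat) : k :=
  match n with
  | 0 => w0
  | n.+1 => let w := wseq c w0 n in w - hg c w / (2 * w + 1)
  end.

Lemma wseq_prop c w0 : vge 0 c -> vge 0 w0 -> vge 1 (hg c w0) -> forall n : nat,
  [/\ vge 0 (wseq c w0 n), vge (n%:Z + 1) (hg c (wseq c w0 n))
    & vge (n%:Z + 1) (wseq c w0 n.+1 - wseq c w0 n)].
Proof.
move=> hc h0 h1. elim=> [|n [IH1 IH2 IH3]].
- have [a1 a2 a3] := hstep (lexx 1) hc h0 h1.
  split => //=. rewrite /= addrAC subrr add0r. rewrite sub0r; exact: vge_opp.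
- have n1 : 1 <= n%:Z + 1 by lia.
  have [a1 a2 a3] := hstep n1 hc IH1 IH2.
  have n2 : 1 <= n.+1%:Z + 1 by lia.
  have a2' : vge (n.+1%:Z + 1) (hg c (wseq c w0 n.+1)).
    apply: (vge_le _ a2); lia.
  have [b1 b2 b3] := hstep n2 hc a1 a2'.
  split => //.
  rewrite [wseq c w0 n.+2]/= -/(wseq c w0 n.+1) addrAC subrr sub0r. exact: vge_opp.
Qed.

Lemma hensel c w0 : vge 0 c -> vge 0 w0 -> vge 1 (hg c w0) -> exists w, hg c w = 0.
Proof.
move=> hc h0 h1.
set u := wseq c w0.
have P := wseq_prop hc h0 h1.
have cau : forall N j : nat, vge (N%:Z + 1) (u (N + j)%N - u N).
  move=> N; elim=> [|j IH]; first by rewrite addn0 subrr; left.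
  have -> : u (N + j.+1)%N - u N = (u (N + j).+1 - u (N + j)%N) + (u (N + j)%N - u N).
    by rewrite addnS addrA subrK.
  apply: vge_add => //. have [_ _ h] := P (N + j)%N. apply: vge_le h. lia.
have cau2 : forall N m : nat, (N <= m)%N -> vge (N%:Z + 1) (u m - u N).
  by move=> N m /subnKC <-; apply: cau.
have [l hl] : exists l : k, forall M : int, exists N : nat, forall n : nat, (N <= n)%N ->
           u n = l \/ M <= v (u n - l).
  apply: vC => M. exists `|M|%N => m n hm hn.
  have : vge (`|M|%N%:Z + 1) (u m - u n).
    have -> : u m - u n = (u m - u `|M|%N) - (u n - u `|M|%N) by rewrite opprB addrA subrK.
    by apply: vge_sub; apply: cau2.
  case=> [/eqP|h]; first by rewrite subr_eq0 => /eqP; left.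
  right; lia.
have hl' : forall M : int, exists N : nat, forall n : nat, (N <= n)%N -> vge M (u n - l).
  move=> M. have [N hN] := hl M. exists N => n /hN [->|h]; [by rewrite subrr; left|by right].
have lO : vge 0 l.
  have [N hN] := hl' 0. have := hN N (leqnn N).
  have [a _ _] := P N. move=> h. have -> : l = u N - (u N - l) by rewrite opprB addrC subrK.
  exact: vge_sub.
exists l. apply: vge_all => M.
have [N hN] := hl' M.
set n := maxn N `|M|%N.
have h1' := hN n (leq_maxl _ _).
have [a b _] := P n.
have e : hg c l = hg c (u n) - (u n - l) * (u n + l + 1) by rewrite /hg; ring.
rewrite e. apply: vge_sub.
- apply: (vge_le _ b). have : (`|M|%N <= n)%N by apply: leq_maxr. lia.
- have o : vge 0 1 by right; rewrite v1.
  have := vge_mul h1' (vge_add (vge_add a lO) o). by rewrite addr0.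
Qed.

Lemma v4 : v 4 = 2 * v 2.
Proof.
have -> : (4:k) = 2 * 2 by rewrite -natrM.
rewrite vM //. lia.
Qed.

Lemma four0 : (4:k) != 0.
Proof. have -> : (4:k) = 2 * 2 by rewrite -natrM. by rewrite mulf_neq0. Qed.

Lemma sq_near1 y : vge (2 * v 2 + 1) y -> exists s, s ^+ 2 = 1 + y.
Proof.
move=> hy.
set c := y / 4.
have hc : vge 1 c.
  have e : c * 4 = y by rewrite /c mulfVK ?four0.
  have := vge_div four0 (eq_ind_r (fun z => vge _ z) hy e). rewrite v4.
  apply: vge_le; lia.
have hc0 : vge 0 c by apply: (vge_le _ hc); lia.
have hg0 : vge 1 (hg c 0) by rewrite /hg expr2 mulr0 !add0r; exact: vge_opp.
have [w hw] := @hensel c 0 hc0 (ge0 0) hg0.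
exists (2 * w + 1). have -> : y = 4 * c by rewrite /c mulrC mulfVK ?four0.
have cE : c = w ^+ 2 + w by apply/eqP; rewrite eq_sym -subr_eq0 -hw. rewrite cE; ring.
Qed.


Lemma int_par (K : int) : exists n : int, K = 2 * n \/ K = 2 * n + 1.
Proof.
exists (K %/ 2)%Z. have := divz_eq K 2. have h1 := modz_ge0 K (isT : (2:int) != 0).
have h2 := ltz_pmod K (isT : (0:int) < 2). lia.
Qed.

Lemma vsum_ne x y : x != 0 -> y != 0 -> v x != v y ->
  x + y != 0 /\ v (x + y) = Num.min (v x) (v y).
Proof.
move=> x0 y0 ne.
case: (ltP (v x) (v y)) => h.
- have hy : vge (v x + 1) y by right; lia.
  have [a b] := vdom x0 hy. split => //; rewrite b; lia.
- have hx : vge (v y + 1) x by right; lia.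
  have [a b] := vdom y0 hx. rewrite addrC in a b. split => //; rewrite b; lia.
Qed.

Variables (pi delta Delta : k).
Hypothesis hpi : pi != 0.
Hypothesis vpi : v pi = 1.
Hypothesis hdelta0 : delta != 0.
Hypothesis vdelta : v delta = 0.
Hypothesis hDelta : Delta = 1 + 4 * delta.
Hypothesis hDsq : ~ exists c : k, c ^+ 2 = Delta.

Lemma no_root w : hg delta w != 0.
Proof.
apply/eqP => h. apply: hDsq. exists (2 * w + 1). rewrite hDelta.
have cE : delta = w ^+ 2 + w by apply/eqP; rewrite eq_sym -subr_eq0 -h.
rewrite cE; ring.
Qed.

Lemma delta_O : vge 0 delta.
Proof. right; lia. Qed.

Lemma no_root1 tau : vge 0 tau -> ~ vge 1 (hg delta tau).
Proof.
move=> ht h. have [w hw] := hensel delta_O ht h. by move: (no_root w); rewrite hw eqxx.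
Qed.

Definition fl (a b : k) := a ^+ 2 + a * b - delta * b ^+ 2.

Lemma fl_val a b : a != 0 \/ b != 0 ->
  exists n, [/\ fl a b != 0, v (fl a b) = 2 * n, vge n a & vge n b].
Proof.
move=> ab.
have fB a' b' : b' != 0 -> vge (v b') a' ->
   exists n, [/\ fl a' b' != 0, v (fl a' b') = 2 * n, vge n a' & vge n b'].
  move=> b0 hab. set tau := a' / b'.
  have ht : vge 0 tau.
    have := vge_mul hab (gev b'^-1). by rewrite vV // subrr.
  have hg0 : vge 0 (hg delta tau).
    rewrite /hg. apply: vge_sub; last exact: delta_O.
    apply: vge_add => //. rewrite expr2. exact: (vge_mul ht ht).
  have n0 := no_root tau.
  have vz : v (hg delta tau) = 0.
    have := vge_nz hg0 n0. case: (ltP 0 (v (hg delta tau))) => h.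
    + by case: (no_root1 ht); right; lia.
    + lia.
  have e : fl a' b' = b' ^+ 2 * hg delta tau.
    rewrite /fl /hg /tau. field. exact: b0.
  exists (v b'). rewrite e. split => //.
  + by rewrite mulf_neq0 // expf_neq0.
  + rewrite vM ?expf_neq0 // vz expr2 vM //. lia.
  + exact: gev.
have [b0|b0] := eqVneq b 0.
- have a0 : a != 0 by case: ab => //; rewrite b0 eqxx.
  have e : fl a b = a ^+ 2 by rewrite /fl b0; ring.
  exists (v a). rewrite e b0. split.
  + by rewrite expf_neq0.
  + rewrite expr2 vM //. lia.
  + exact: gev.
  + exact: ge0.
- case: (leP (v b) (v a)) => h.
  + have [->|a0] := eqVneq a 0; first by apply: fB => //; left.
    by apply: fB => //; right.
  + have [->|a0] := eqVneq a 0; first by apply: fB => //; left.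
    set beta := b / a.
    have hb : vge 1 beta.
      have := vge_mul (gev b) (gev a^-1). rewrite vV //. apply: vge_le. lia.
    have hu : vge 1 (beta - delta * beta ^+ 2).
      apply: vge_sub => //. have := vge_mul delta_O (vge_mul hb hb).
      rewrite expr2. apply: vge_le. lia.
    have [u0 vu] := unit1 hu.
    have e : fl a b = a ^+ 2 * (1 + (beta - delta * beta ^+ 2)).
      rewrite /fl /beta. field. exact: a0.
    exists (v a). rewrite e. split.
    * by rewrite mulf_neq0 // expf_neq0.
    * rewrite vM ?expf_neq0 // vu expr2 vM //. lia.
    * exact: gev.
    * right; lia.
Qed.

Lemma fl_ge K a b n : vge K (fl a b) -> 2 * n <= K + 1 -> vge n a /\ vge n b.
Proof.
move=> hK hn.
have [a0|a0] := eqVneq a 0; have [b0|b0] := eqVneq b 0.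
- by rewrite a0 b0; split; left.
- have [m [f0 fv ha hb]] := @fl_val a b (or_intror b0).
  have := vge_nz hK f0. rewrite fv => h.
  split; [apply: (vge_le _ ha)|apply: (vge_le _ hb)]; lia.
- have [m [f0 fv ha hb]] := @fl_val a b (or_introl a0).
  have := vge_nz hK f0. rewrite fv => h.
  split; [apply: (vge_le _ ha)|apply: (vge_le _ hb)]; lia.
- have [m [f0 fv ha hb]] := @fl_val a b (or_introl a0).
  have := vge_nz hK f0. rewrite fv => h.
  split; [apply: (vge_le _ ha)|apply: (vge_le _ hb)]; lia.
Qed.

Lemma fl_le n a b : vge n a -> vge n b -> vge (2 * n) (fl a b).
Proof.
move=> ha hb. rewrite /fl !expr2.
have -> : 2 * n = n + n by lia.
apply: vge_sub; first by apply: vge_add; apply: vge_mul.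
have := vge_mul delta_O (vge_mul hb hb). by rewrite add0r.
Qed.

Local Notation N := (qnorm pi Delta).
Local Notation qm := (qmul pi Delta).

Definition ls0 (q : quat k) := q0 q - q2 q.
Definition ls1 (q : quat k) := 2 * q2 q.
Definition ls2 (q : quat k) := q1 q - q3 q.
Definition ls3 (q : quat k) := 2 * q3 q.

Lemma qnorm_lat q : N q = fl (ls0 q) (ls1 q) - pi * fl (ls2 q) (ls3 q).
Proof. rewrite /qnorm /fl /ls0 /ls1 /ls2 /ls3 hDelta. ring. Qed.

Lemma N_split K q : vge K (N q) ->
  vge K (fl (ls0 q) (ls1 q)) /\ vge (K - 1) (fl (ls2 q) (ls3 q)).
Proof.
rewrite qnorm_lat. set F1 := fl _ _. set F2 := fl _ _. move=> h.
have mpi : - pi != 0 by rewrite oppr_eq0.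
have vmpi : v (- pi) = 1 by rewrite vN.
have [e1|n1] := eqVneq F1 0.
- split; first by left.
  move: h; rewrite e1 sub0r mulrC -mulrN => h.
  by have := vge_div mpi h; rewrite vmpi.
have [e2|n2] := eqVneq F2 0.
- split; last by left.
  by move: h; rewrite e2 mulr0 subr0.
have [m1 [_ f1 _ _]] : exists n, [/\ F1 != 0, v F1 = 2 * n, vge n (ls0 q) & vge n (ls1 q)].
  apply: fl_val. case: (eqVneq (ls0 q) 0) => [z0|]; last by left.
  case: (eqVneq (ls1 q) 0) => [z1|]; last by right.
  by move: n1; rewrite /F1 z0 z1 /fl; rewrite expr2 !mul0r !mulr0 !subr0 addr0 eqxx.
have [m2 [_ f2 _ _]] : exists n, [/\ F2 != 0, v F2 = 2 * n, vge n (ls2 q) & vge n (ls3 q)].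
  apply: fl_val. case: (eqVneq (ls2 q) 0) => [z0|]; last by left.
  case: (eqVneq (ls3 q) 0) => [z1|]; last by right.
  by move: n2; rewrite /F2 z0 z1 /fl; rewrite expr2 !mul0r !mulr0 !subr0 addr0 eqxx.
have p0 : - (pi * F2) != 0 by rewrite oppr_eq0 mulf_neq0.
have vp : v (- (pi * F2)) = 1 + 2 * m2 by rewrite vN ?mulf_neq0 // vM // vpi f2.
have ne : v F1 != v (- (pi * F2)) by rewrite vp f1; apply/eqP; lia.
have [s0 sv] := vsum_ne n1 p0 ne.
have := vge_nz h s0. rewrite sv vp f1 => hm.
split; right.
- rewrite f1; lia.
- rewrite f2; lia.
Qed.

Lemma lat_ge K q : vge K (N q) ->
  (forall n, 2 * n <= K + 1 -> vge n (ls0 q) /\ vge n (ls1 q)) /\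
  (forall n, 2 * n <= K -> vge n (ls2 q) /\ vge n (ls3 q)).
Proof.
move=> /N_split [h1 h2]; split => n hn.
- exact: fl_ge h1 hn.
- apply: fl_ge h2 _. lia.
Qed.

Lemma lat_le K n n' q : vge n (ls0 q) -> vge n (ls1 q) -> vge n' (ls2 q) -> vge n' (ls3 q) ->
  K <= 2 * n -> K <= 2 * n' + 1 -> vge K (N q).
Proof.
move=> h0 h1 h2 h3 k1 k2. rewrite qnorm_lat.
apply: vge_sub.
- apply: (vge_le k1). exact: fl_le.
- have := vge_mul (gev pi) (fl_le h2 h3). rewrite vpi. apply: vge_le. lia.
Qed.

Lemma qnorm0 q : N q = 0 -> q = Quat 0 0 0 0.
Proof.
move=> h.
have all : forall n, vge n (ls0 q) /\ vge n (ls1 q) /\ vge n (ls2 q) /\ vge n (ls3 q).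
  move=> n. have hK : vge (2 * n) (N q) by rewrite h; left.
  have [A B] := lat_ge hK.
  have i1 : 2 * n <= 2 * n + 1 by lia. have i2 : 2 * n <= 2 * n by lia.
  have [a b] := A n i1. have [c d] := B n i2. by [].
have z0 : ls0 q = 0 by apply: vge_all => n; case: (all n).
have z1 : ls1 q = 0 by apply: vge_all => n; case: (all n) => _ [].
have z2 : ls2 q = 0 by apply: vge_all => n; case: (all n) => _ [] _ [].
have z3 : ls3 q = 0 by apply: vge_all => n; case: (all n) => _ [] _ [].
case: q z0 z1 z2 z3 {h all}; rewrite /ls0 /ls1 /ls2 /ls3 /= => a b c d.
move=> h0 /eqP; rewrite mulf_eq0 (negbTE two0) /= => /eqP h1.
move=> h2 /eqP; rewrite mulf_eq0 (negbTE two0) /= => /eqP h3.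
move: h0 h2; rewrite h1 h3 !subr0 => -> ->. by [].
Qed.

Lemma tr_bound K n w : vge K (N w) -> 2 * n <= K + 1 -> vge n (2 * q0 w).
Proof.
move=> h hn. have [A _] := lat_ge h. have [a b] := A n hn.
have -> : 2 * q0 w = 2 * ls0 w + ls1 w by rewrite /ls0 /ls1; ring.
have z1 : (0:int) <= 1 by lia.
apply: vge_add => //. have := vge_mul (vge_le z1 vge_2) a. by rewrite add0r.
Qed.

Lemma qnorm_add_ge K x y : vge K (N x) -> vge K (N y) -> vge K (N (qadd x y)).
Proof.
move=> hx hy. have [n hn] := int_par K.
have [Ax Bx] := lat_ge hx. have [Ay By] := lat_ge hy.
have E0 : ls0 (qadd x y) = ls0 x + ls0 y by rewrite /ls0 /=; ring.
have E1 : ls1 (qadd x y) = ls1 x + ls1 y by rewrite /ls1 /=; ring.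
have E2 : ls2 (qadd x y) = ls2 x + ls2 y by rewrite /ls2 /=; ring.
have E3 : ls3 (qadd x y) = ls3 x + ls3 y by rewrite /ls3 /=; ring.
case: hn => hK.
- have i1 : 2 * n <= K + 1 by lia. have i2 : 2 * n <= K by lia.
  have [a0 a1] := Ax n i1. have [b0 b1] := Ay n i1.
  have [c0 c1] := Bx n i2. have [d0 d1] := By n i2.
  apply: (@lat_le K n n); rewrite ?E0 ?E1 ?E2 ?E3; try apply: vge_add => //; lia.
- have i1 : 2 * (n + 1) <= K + 1 by lia. have i2 : 2 * n <= K by lia.
  have [a0 a1] := Ax (n + 1) i1. have [b0 b1] := Ay (n + 1) i1.
  have [c0 c1] := Bx n i2. have [d0 d1] := By n i2.
  apply: (@lat_le K (n + 1) n); rewrite ?E0 ?E1 ?E2 ?E3; try apply: vge_add => //; lia.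
Qed.

Definition pol (x y : quat k) := 2 * q0 (qm x (qconj y)).

Lemma qnormM x y : N (qm x y) = N x * N y.
Proof. case: x => x0 x1 x2 x3; case: y => y0 y1 y2 y3; rewrite /qnorm /qmul /=; ring. Qed.

Lemma qnormC x : N (qconj x) = N x.
Proof. case: x => x0 x1 x2 x3; rewrite /qnorm /qconj /=; ring. Qed.

Lemma qnormO x : N (qopp x) = N x.
Proof. case: x => x0 x1 x2 x3; rewrite /qnorm /qopp /=; ring. Qed.

Lemma qnormD x y : N (qadd x y) = N x + pol x y + N y.
Proof. case: x => x0 x1 x2 x3; case: y => y0 y1 y2 y3; rewrite /pol /qnorm /qmul /qconj /qadd /=; ring. Qed.

Lemma polD z x y : pol z (qadd x y) = pol z x + pol z y.
Proof. case: x => x0 x1 x2 x3; case: y => y0 y1 y2 y3; case: z => z0 z1 z2 z3; rewrite /pol /qmul /qconj /qadd /=; ring. Qed.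

Lemma polO z x : pol z (qopp x) = - pol z x.
Proof. case: x => x0 x1 x2 x3; case: z => z0 z1 z2 z3; rewrite /pol /qmul /qconj /qopp /=; ring. Qed.

Lemma big_id (a r : quat k) : q0 a = 0 ->
  let z := qsub a (qm (qm r a) (qconj r)) in
  N z + pol r a ^+ 2 = N a * N (qsub qone r) * N (qadd qone r).
Proof.
case: a => a0 a1 a2 a3 /= ->; case: r => r0 r1 r2 r3.
rewrite /pol /qnorm /qmul /qconj /qadd /qsub /qopp /qone /=; ring.
Qed.

Definition lam (a r : quat k) := pol r a / (2 * N a).
Definition mu (a r : quat k) :=
  qsub (qsub r (qscale (q0 r) qone)) (qscale (lam a r) a).

Lemma mu_id (a r : quat k) X Y : q0 a = 0 -> N a != 0 ->
  N (qadd (qadd (qscale X qone) (qscale Y a)) (mu a r)) = X ^+ 2 + Y ^+ 2 * N a + N (mu a r).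
Proof.
move=> a0 na. move: na; rewrite /mu /lam.
case: a a0 => a0 a1 a2 a3 /= ->; case: r => r0 r1 r2 r3.
rewrite /pol /qnorm /qmul /qconj /qadd /qsub /qopp /qone /qscale /= => na.
field. rewrite two0 andbT. by move: na; rewrite expr2 mul0r sub0r.
Qed.

Lemma Nr_id (a r : quat k) : q0 a = 0 -> N a != 0 ->
  N r = q0 r ^+ 2 + lam a r ^+ 2 * N a + N (mu a r).
Proof.
move=> a0 na. move: na; rewrite /mu /lam.
case: a a0 => a0 a1 a2 a3 /= ->; case: r => r0 r1 r2 r3.
rewrite /pol /qnorm /qmul /qconj /qadd /qsub /qopp /qone /qscale /= => na.
field. rewrite two0 andbT. by move: na; rewrite expr2 mul0r sub0r.
Qed.

Lemma Na_pure (a : quat k) X Y : q0 a = 0 ->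
  N (qadd (qscale X qone) (qscale Y a)) = X ^+ 2 + Y ^+ 2 * N a.
Proof. case: a => a0 a1 a2 a3 /= ->. rewrite /qnorm /qadd /qscale /qone /=; ring. Qed.

Definition NF (Na X : k) := exists w Z Y, w != 0 /\ X * w ^+ 2 = Z ^+ 2 + Na * Y ^+ 2.

Lemma NF_hil Na X : hilbert_neg1 X (- Na) -> ~ NF Na X.
Proof.
move=> h [w [Z [Y [w0 e]]]].
have e2 : Z ^+ 2 = X * w ^+ 2 + (- Na) * Y ^+ 2 by rewrite e; ring.
have [w00 _] := h w Y Z e2. by move: w0; rewrite w00 eqxx.
Qed.

Lemma NF_val Na Z Y : NF Na (Z ^+ 2 + Na * Y ^+ 2).
Proof. exists 1, Z, Y. by rewrite oner_neq0 expr1n mulr1. Qed.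

Lemma NF_mul Na X Y : NF Na (X * Y) -> NF Na Y -> Y != 0 -> NF Na X.
Proof.
move=> [w1 [Z1 [Y1 [w10 e1]]]] [w2 [Z2 [Y2 [w20 e2]]]] Y0.
exists (Y * w1 * w2), (Z1 * Z2 - Na * Y1 * Y2), (Z1 * Y2 + Y1 * Z2).
split; first by rewrite !mulf_neq0.
have -> : X * (Y * w1 * w2) ^+ 2 = (X * Y * w1 ^+ 2) * (Y * w2 ^+ 2) by ring.
rewrite e1 e2; ring.
Qed.

Lemma hil_sq (X Na s : k) : hilbert_neg1 X (- Na) -> s != 0 -> hilbert_neg1 (X * s ^+ 2) (- Na).
Proof.
move=> h s0 x y z e.
have e2 : z ^+ 2 = X * (s * x) ^+ 2 + (- Na) * y ^+ 2 by rewrite e; ring.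
have [a [b c]] := h _ _ _ e2. split => //.
by move/eqP: a; rewrite mulf_eq0 (negbTE s0) /= => /eqP.
Qed.

Lemma vdiv n (x c : k) : c != 0 -> vge (n + v c) x -> vge n (x / c).
Proof.
move=> c0 h. have := vge_mul h (gev c^-1). rewrite vV //.
by have -> : n + v c + - v c = n by lia.
Qed.

Lemma near1_sq (X y : k) : vge (2 * v 2 + 1) y -> exists s, s != 0 /\ X * (1 + y) = X * s ^+ 2.
Proof.
move=> hy. have [s hs] := sq_near1 hy. exists s. split; last by rewrite hs.
apply/eqP => s0. have i : 1 <= 2 * v 2 + 1 by lia.
have [u0 _] := unit1 (vge_le i hy).
by move: u0; rewrite -hs s0 expr2 mul0r eqxx.
Qed.

Lemma qadd0 (x y : quat k) : qadd x y = Quat 0 0 0 0 ->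
  [/\ q0 y = - q0 x, q1 y = - q1 x, q2 y = - q2 x & q3 y = - q3 x].
Proof.
case: x => x0 x1 x2 x3; case: y => y0 y1 y2 y3; rewrite /qadd /=.
case=> /eqP h0 /eqP h1 /eqP h2 /eqP h3.
by split; apply/eqP; rewrite -addr_eq0 addrC.
Qed.

Section Main.
Variable a : quat k.
Hypothesis a0 : q0 a = 0.
Hypothesis anz : a <> Quat 0 0 0 0.

Lemma Na0 : N a != 0.
Proof. apply/eqP => h. exact: anz (qnorm0 h). Qed.

Lemma nsq X Y : X ^+ 2 + N a * Y ^+ 2 = 0 -> X = 0 /\ Y = 0.
Proof.
move=> h. have h2 := Na_pure X Y a0. rewrite mulrC h in h2.
have q0E := qnorm0 h2.
move: anz q0E. case: a a0 => b0 b1 b2 b3 /= -> an.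
rewrite /qadd /qscale /qone /= !mulr0 mulr1 !add0r addr0.
case=> -> e1 e2 e3. split => //.
have [Y0|Y0] := eqVneq Y 0; first by []. exfalso; apply: an.
move/eqP: e1; rewrite mulf_eq0 (negbTE Y0) /= => /eqP ->.
move/eqP: e2; rewrite mulf_eq0 (negbTE Y0) /= => /eqP ->.
by move/eqP: e3; rewrite mulf_eq0 (negbTE Y0) /= => /eqP ->.
Qed.

Lemma mu_nonnorm r : N (mu a r) != 0 -> ~ NF (N a) (- N (mu a r)).
Proof.
move=> m0 [w [Z [Y [w0 e]]]].
set m := N (mu a r) in m0 e *.
have h : (Z / w) ^+ 2 + (Y / w) ^+ 2 * N a + m = 0.
  apply: (mulIf (expf_neq0 2 w0)). rewrite mul0r.
  have -> : ((Z / w) ^+ 2 + (Y / w) ^+ 2 * N a + m) * w ^+ 2 = Z ^+ 2 + N a * Y ^+ 2 + m * w ^+ 2.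
    by field.
  by rewrite -e; ring.
have hq := mu_id r (Z / w) (Y / w) a0 Na0.
rewrite h in hq. have qz := qnorm0 hq.
set p := qadd (qscale (Z / w) qone) (qscale (Y / w) a) in qz.
have Np := Na_pure (Z / w) (Y / w) a0.
have [e0 e1 e2 e3] := qadd0 qz.
have mE : m = N p by rewrite /m /qnorm e0 e1 e2 e3; ring.
rewrite -/p in Np. rewrite mE Np in h.
have : 2 * m = 0 by rewrite mE Np -h; ring.
move/eqP; rewrite mulf_eq0 (negbTE two0) /= => /eqP m00.
by move: m0; rewrite m00 eqxx.
Qed.

Lemma HE (r : quat k) : N (qsub qone r) = 1 - 2 * q0 r + N r.
Proof. case: r => r0 r1 r2 r3; rewrite /qnorm /qsub /qadd /qopp /qone /=; ring. Qed.

Lemma H'E (r : quat k) : N (qadd qone r) = 1 + 2 * q0 r + N r.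
Proof. case: r => r0 r1 r2 r3; rewrite /qnorm /qadd /qone /=; ring. Qed.

Lemma q0sub (r : quat k) : q0 (qsub qone r) = 1 - q0 r.
Proof. by []. Qed.

Lemma kbounds (r : quat k) (t : int) : kstar v pi Delta a t r ->
  [/\ N (qsub qone r) != 0, v (N (qsub qone r)) <= 6 * v 2,
      N (qsub a (qm (qm r a) (qconj r))) != 0 &
      v (N (qsub a (qm (qm r a) (qconj r)))) - v (N a) <= 8 * v 2].
Proof.
move=> [K1 [[c [c0 cE]] K3]].
set z := qsub a (qm (qm r a) (qconj r)) in cE *.
have na := Na0.
have Nz0 : N z != 0.
  apply/eqP => h; move: cE; rewrite h mul0r => /esym/eqP; rewrite expf_eq0 /=.
  by rewrite (negbTE c0).
have BI := big_id r a0. rewrite -/z in BI.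
have NzE : N z = c ^+ 2 / N a by rewrite -cE mulfK.
clearbody z.
have HH : N (qsub qone r) * N (qadd qone r) = (c / N a) ^+ 2 + N a * (pol r a / N a) ^+ 2.
  have -> : N (qsub qone r) * N (qadd qone r) = (N z + pol r a ^+ 2) / N a.
    by rewrite BI; field.
  by rewrite NzE; field.
have HH0 : N (qsub qone r) * N (qadd qone r) != 0.
  apply/eqP => h0. have [x0 _] := nsq (esym (etrans (esym h0) HH)).
  move/eqP: x0; rewrite mulf_eq0 invr_eq0 (negbTE na) orbF => /eqP x0.
  by move: c0; rewrite x0 eqxx.
have [H0 H'0] : N (qsub qone r) != 0 /\ N (qadd qone r) != 0.
  by move: HH0; rewrite mulf_eq0 negb_or => /andP.
have nH : ~ NF (N a) (N (qsub qone r)) := NF_hil K1.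
have nH' : ~ NF (N a) (N (qadd qone r)).
  move=> h'. apply: nH. apply: (NF_mul _ h' H'0). rewrite HH. exact: NF_val.
have B1 : v (N (qsub qone r)) <= 6 * v 2.
  case: (leP (v (N (qsub qone r))) (6 * v 2)) => // hv. exfalso.
  have hx : vge (6 * v 2 + 1) (N (qsub qone r)) by right; vlia.
  have i1 : 2 * (3 * v 2 + 1) <= 6 * v 2 + 1 + 1 by vlia.
  have t1 := tr_bound hx i1. rewrite q0sub in t1.
  have yb : vge (2 * v 2 + 1) ((- 2 * (2 * (1 - q0 r)) + N (qsub qone r)) / 4).
    apply: vdiv; first exact: four0. rewrite v4. apply: vge_add.
    * have m20 : (-2 : k) != 0 by rewrite oppr_eq0.
      have := vge_mul (gev (-2)) t1. rewrite vN //. apply: vge_le. vlia.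
    * apply: (vge_le _ (gev _)). vlia.
  have [s [s0 sE]] := near1_sq 4 yb.
  apply: nH'. exists 1, (2 * s), 0. split; first exact: oner_neq0.
  have -> : N (qadd qone r) = 4 * (1 + (- 2 * (2 * (1 - q0 r)) + N (qsub qone r)) / 4).
    rewrite H'E HE. field. exact: four0.
  rewrite sE. ring.
set m := N (mu a r). set l := lam a r.
have NrE : N r = q0 r ^+ 2 + l ^+ 2 * N a + m := Nr_id r a0 na.
have PE : pol r a = 2 * l * N a by rewrite /l /lam; field; rewrite two0 na.
have mE : m = N (mu a r) by [].
clearbody m l.
have EH : N (qsub qone r) = ((1 - q0 r) ^+ 2 + N a * l ^+ 2) + m.
  by rewrite HE NrE; ring.
have EH' : N (qadd qone r) = ((1 + q0 r) ^+ 2 + N a * l ^+ 2) + m.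
  by rewrite H'E NrE; ring.
have m0 : m != 0.
  apply/eqP => m00. apply: nH. rewrite EH m00 addr0. exact: NF_val.
have nm : ~ NF (N a) (- m).
  have m0' : N (mu a r) != 0 by rewrite -mE.
  rewrite mE. exact: mu_nonnorm m0'.
have B2 : forall X n0 Z Y, ~ NF (N a) X -> X = n0 + m -> n0 = Z ^+ 2 + N a * Y ^+ 2 ->
    X != 0 -> v m <= v X + 2 * v 2.
  move=> X n0 Z Y nX XE nE X0. case: (leP (v m) (v X + 2 * v 2)) => // hv; exfalso.
  have yb : vge (2 * v 2 + 1) (- m / X).
    apply: (@vdiv (2 * v 2 + 1) (- m) X X0). right. rewrite vN //. vlia.
  have [s [s0 sE]] := near1_sq X yb.
  apply: nX. exists s, Z, Y. split => //. rewrite -sE -nE XE. field.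
  by rewrite -XE.
have vmH := B2 _ _ _ _ nH EH erefl H0.
have vmH' := B2 _ _ _ _ nH' EH' erefl H'0.
have QE : N z = N a * ((1 - N r) ^+ 2 + 4 * m).
  have -> : N z = N a * N (qsub qone r) * N (qadd qone r) - pol r a ^+ 2 by rewrite -BI; ring.
  rewrite HE H'E PE NrE. ring.
set A := 1 - N r in QE. set Q := A ^+ 2 + 4 * m in QE.
have Q0 : Q != 0 by move: Nz0; rewrite QE mulf_eq0 negb_or => /andP[].
have vQ : v (N z) - v (N a) = v Q by rewrite QE vM //; vlia.
split => //. rewrite vQ.
case: (leP (v Q) (8 * v 2)) => // hQ; exfalso.
have m40 : 4 * m != 0 by rewrite mulf_neq0 // four0.
have v4m : v (4 * m) = 2 * v 2 + v m by rewrite vM ?four0 // v4.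
case: (leP (v (4 * m)) (6 * v 2)) => h4.
- have Qb : vge (v (- (4 * m)) + 1) Q by right; rewrite vN //; vlia.
  have nm40 : - (4 * m) != 0 by rewrite oppr_eq0.
  have [A0 vA2] := vdom nm40 Qb.
  have AE : A ^+ 2 = - (4 * m) + Q by rewrite /Q; ring.
  rewrite -AE in A0 vA2.
  have yb : vge (2 * v 2 + 1) (- Q / A ^+ 2).
    apply: (@vdiv (2 * v 2 + 1) (- Q) (A ^+ 2) A0). right. rewrite vN // vA2 vN //. vlia.
  have [s [s0 sE]] := near1_sq (A ^+ 2) yb.
  apply: nm. exists 2, (A * s), 0. split => //.
  have e1 : A ^+ 2 * (1 + - Q / A ^+ 2) = - (4 * m).
    have Anz : A != 0 by apply/eqP => h; move: A0; rewrite h expr2 mul0r eqxx.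
    have -> : A ^+ 2 * (1 + - Q / A ^+ 2) = A ^+ 2 - Q by field.
    by rewrite AE; ring.
  have e2 : (A * s) ^+ 2 = - (4 * m) by rewrite exprMn -sE e1.
  rewrite e2. ring.
- have vm : 4 * v 2 + 1 <= v m by vlia.
  have vH : vge (2 * v 2 + 1) (N (qsub qone r)) by right; vlia.
  have vH' : vge (2 * v 2 + 1) (N (qadd qone r)) by right; vlia.
  have sumE : N (qsub qone r) + N (qadd qone r) = 4 - 2 * A by rewrite HE H'E /A; ring.
  have yb : vge 1 (- (N (qsub qone r) + N (qadd qone r)) / 4).
    apply: vdiv; first exact: four0. rewrite v4. apply: vge_opp.
    apply: (vge_le _ (vge_add vH vH')). vlia.
  have [u0 vu] := unit1 yb.
  have AE : A = 2 * (1 + (- (N (qsub qone r) + N (qadd qone r)) / 4)).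
    rewrite sumE. field. exact: four0.
  have A0 : A != 0 by rewrite AE mulf_neq0.
  have vAA : v A = v 2 by rewrite AE vM // vu addr0.
  have A20 : A ^+ 2 != 0 by rewrite expf_neq0.
  have vA2 : v (A ^+ 2) = 2 * v 2 by rewrite expr2 vM // vAA; vlia.
  have Qb : vge (v (A ^+ 2) + 1) (4 * m) by right; vlia.
  have [_ vQ2] := vdom A20 Qb.
  rewrite -/Q vA2 in vQ2. vlia.
Qed.

Lemma sub1_sub (r d : quat k) : qsub qone (qsub r d) = qadd (qsub qone r) d.
Proof.
case: r => r0 r1 r2 r3; case: d => d0 d1 d2 d3.
rewrite /qsub /qadd /qopp /qone /=. congr Quat; ring.
Qed.

Lemma z_pert (r d : quat k) :
  qsub a (qm (qm (qsub r d) a) (qconj (qsub r d))) =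
  qadd (qsub a (qm (qm r a) (qconj r)))
    (qadd (qadd (qm (qm d a) (qconj r)) (qm (qm r a) (qconj d))) (qopp (qm (qm d a) (qconj d)))).
Proof.
case: a => a0' a1 a2 a3; case: r => r0 r1 r2 r3; case: d => d0 d1 d2 d3.
rewrite /qsub /qadd /qopp /qmul /qconj /=. congr Quat; ring.
Qed.

Lemma perturb (r d : quat k) (t : int) : 1 <= t -> vge 0 (N r) -> kstar v pi Delta a t r ->
  vge (2 * (t + 6 * v 2)) (N d) -> kstar v pi Delta a t (qsub r d).
Proof.
move=> t1 hr K hd.
have [H0 vH Nz0 vQ] := kbounds K.
move: K => [K1 [[c [c0 cE]] K3]].
have na := Na0.
set u := t + 6 * v 2 in hd.
have u1 : 6 * v 2 + 1 <= u by rewrite /u; vlia.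
clearbody u.
set x := qsub qone r in K1 H0 vH *.
set z := qsub a (qm (qm r a) (qconj r)) in cE K3 Nz0 vQ *.
have Hn : N (qsub qone (qsub r d)) = N x * (1 + (pol x d + N d) / N x).
  rewrite sub1_sub qnormD -/x. field. exact: H0.
have y1 : vge (2 * v 2 + 1) ((pol x d + N d) / N x).
  apply: (@vdiv (2 * v 2 + 1) _ (N x) H0). apply: vge_add.
  - have hxd : vge (v (N x) + 2 * u) (N (qm x (qconj d))).
      by rewrite qnormM qnormC; exact: vge_mul (gev _) hd.
    have i : 2 * (2 * v 2 + 1 + v (N x)) <= v (N x) + 2 * u + 1 by vlia.
    exact: tr_bound hxd i.
  - apply: (vge_le _ hd). vlia.
have [s [s0 sE]] := near1_sq (N x) y1.
rewrite sE in Hn.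
set E1 := qm (qm d a) (qconj r). set E2 := qm (qm r a) (qconj d).
set E3 := qm (qm d a) (qconj d).
have bE1 : vge (v (N a) + 2 * u) (N E1).
  rewrite /E1 !qnormM qnormC. have := vge_mul (vge_mul hd (gev (N a))) hr.
  by rewrite addr0 addrC.
have bE2 : vge (v (N a) + 2 * u) (N E2).
  rewrite /E2 !qnormM qnormC. have := vge_mul (vge_mul hr (gev (N a))) hd.
  by rewrite add0r.
have bE3 : vge (v (N a) + 2 * u) (N E3).
  rewrite /E3 !qnormM qnormC. have := vge_mul (vge_mul hd (gev (N a))) hd.
  apply: vge_le. vlia.
have bE : vge (v (N a) + 2 * u) (N (qadd (qadd E1 E2) (qopp E3))).
  apply: qnorm_add_ge; first exact: qnorm_add_ge.
  by rewrite qnormO.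
have bpol : forall E, vge (v (N a) + 2 * u) (N E) -> vge (2 * v 2 + 1 + v (N z)) (pol z E).
  move=> E hE.
  have hzE : vge (v (N z) + (v (N a) + 2 * u)) (N (qm z (qconj E))).
    by rewrite qnormM qnormC; exact: vge_mul (gev _) hE.
  have i : 2 * (2 * v 2 + 1 + v (N z)) <= v (N z) + (v (N a) + 2 * u) + 1 by vlia.
  exact: tr_bound hzE i.
have Zn : N (qsub a (qm (qm (qsub r d) a) (qconj (qsub r d)))) =
    N z * (1 + (pol z (qadd (qadd E1 E2) (qopp E3)) + N (qadd (qadd E1 E2) (qopp E3))) / N z).
  rewrite z_pert qnormD -/z -/E1 -/E2 -/E3. field. exact: Nz0.
have y2 : vge (2 * v 2 + 1) ((pol z (qadd (qadd E1 E2) (qopp E3)) + N (qadd (qadd E1 E2) (qopp E3))) / N z).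
  apply: (@vdiv (2 * v 2 + 1) _ (N z) Nz0). apply: vge_add.
  - rewrite !polD polO. apply: vge_add; first apply: vge_add.
    + exact: bpol.
    + exact: bpol.
    + apply: vge_opp. exact: bpol.
  - apply: (vge_le _ bE). vlia.
have [s2 [s20 s2E]] := near1_sq (N z) y2.
rewrite s2E in Zn.
split; [|split].
- rewrite Hn. exact: hil_sq.
- exists (c * s2). split; first by rewrite mulf_neq0.
  rewrite Zn. have -> : N z * s2 ^+ 2 * N a = (N z * N a) * s2 ^+ 2 by ring.
  by rewrite cE exprMn.
- rewrite Zn. have -> : forall w : k, N z * s2 ^+ 2 / w = (N z / w) * s2 ^+ 2 by move=> w; ring.
  have h2 : vge 0 (s2 ^+ 2).
    have [s3 s3E] := sq_near1 y2.
    have : N z * s2 ^+ 2 = N z * (1 + (pol z (qadd (qadd E1 E2) (qopp E3)) + N (qadd (qadd E1 E2) (qopp E3))) / N z) by rewrite s2E.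
    move/(mulfI Nz0) => ->. apply: vge_add; first by right; rewrite v1.
    apply: (vge_le _ y2). vlia.
  have := vge_mul K3 h2. by rewrite addr0.
Qed.

Lemma vexpz (t : int) : v (pi ^ t) = t.
Proof.
have vn : forall n : nat, v (pi ^+ n) = n%:Z.
  elim=> [|n IH]; first by rewrite expr0 v1.
  rewrite exprS vM ?expf_neq0 // IH vpi. vlia.
case: t => n.
- by rewrite -exprnP vn.
- rewrite NegzE -exprnN vV ?expf_neq0 // vn. vlia.
Qed.

Lemma lat_elt_ls s0 s1 s2 s3 :
  let q := lattice_elt pi Delta s0 s1 s2 s3 in
  [/\ ls0 q = s0, ls1 q = s1, ls2 q = s2 & ls3 q = s3].
Proof.
rewrite /lattice_elt /ls0 /ls1 /ls2 /ls3 /qadd /qscale /qone /qomega /qi /qmul /=.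
split; field; exact: two0.
Qed.

Lemma qsubK (r x : quat k) : qsub r (qsub r x) = x.
Proof.
case: r => r0 r1 r2 r3; case: x => x0 x1 x2 x3.
rewrite /qsub /qadd /qopp /=. congr Quat; ring.
Qed.

Lemma main_equiv (t : int) (S : seq k) : 1 <= t -> reps_mod v pi (t + 6 * v 2) S ->
  (exists r, in_OD v pi Delta r /\ kstar v pi Delta a t r) <->
  (exists s0 s1 s2 s3, [/\ s0 \in S, s1 \in S, s2 \in S & s3 \in S] /\
     kstar v pi Delta a t (lattice_elt pi Delta s0 s1 s2 s3)).
Proof.
move=> t1 [hS1 hS2]. split.
- move=> [r [hr K]].
  have hr0 : vge 0 (N r) := hr.
  have [A B] := lat_ge hr0.
  have i1 : 2 * 0 <= (0:int) + 1 by []. have i2 : 2 * 0 <= (0:int) by [].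
  have [l0 l1] := A 0 i1. have [l2 l3] := B 0 i2.
  have [p0 [p0S [[y0 [y0O e0]] _]]] := hS2 _ l0.
  have [p1 [p1S [[y1 [y1O e1]] _]]] := hS2 _ l1.
  have [p2 [p2S [[y2 [y2O e2]] _]]] := hS2 _ l2.
  have [p3 [p3S [[y3 [y3O e3]] _]]] := hS2 _ l3.
  exists p0, p1, p2, p3. split => //.
  set al := lattice_elt pi Delta p0 p1 p2 p3.
  have [la0 la1 la2 la3] := lat_elt_ls p0 p1 p2 p3. rewrite -/al in la0 la1 la2 la3.
  set u := t + 6 * v 2 in e0 e1 e2 e3.
  have pu : pi ^ u != 0 by rewrite expfz_neq0.
  have gy : forall y, in_Ok v y -> vge u (pi ^ u * y).
    move=> y hy. have := vge_mul (gev (pi ^ u)) hy. by rewrite vexpz addr0.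
  have hd : vge (2 * u) (N (qsub r al)).
    apply: (@lat_le _ u u).
    + have -> : ls0 (qsub r al) = ls0 r - ls0 al by rewrite /ls0 /qsub /qadd /qopp /=; ring.
      by rewrite la0 e0; apply: gy.
    + have -> : ls1 (qsub r al) = ls1 r - ls1 al by rewrite /ls1 /qsub /qadd /qopp /=; ring.
      by rewrite la1 e1; apply: gy.
    + have -> : ls2 (qsub r al) = ls2 r - ls2 al by rewrite /ls2 /qsub /qadd /qopp /=; ring.
      by rewrite la2 e2; apply: gy.
    + have -> : ls3 (qsub r al) = ls3 r - ls3 al by rewrite /ls3 /qsub /qadd /qopp /=; ring.
      by rewrite la3 e3; apply: gy.
    + vlia.
    + vlia.
  have := perturb t1 hr0 K hd. by rewrite qsubK.
- move=> [s0 [s1 [s2 [s3 [[h0 h1 h2 h3] K]]]]].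
  exists (lattice_elt pi Delta s0 s1 s2 s3). split => //.
  have [la0 la1 la2 la3] := lat_elt_ls s0 s1 s2 s3.
  apply: (@lat_le 0 0 0); rewrite ?la0 ?la1 ?la2 ?la3; try apply: hS1 => //; vlia.
Qed.

End Main.

End Val.

Unset Implicit Arguments.

Theorem theorem4
  (k : fieldType) (v : k -> int) (pi delta Delta : k)
  (hk : is_dyadic_local_field v)
  (hpi : pi != 0 /\ v pi = 1)
  (hdelta : delta != 0 /\ v delta = 0)
  (hDelta : Delta = 1 + 4 * delta)
  (hDelta_nsq : ~ exists c : k, c ^+ 2 = Delta)
  (a1 a2 : quat k)
  (ha1 : qpure a1 /\ a1 <> Quat 0 0 0 0)
  (ha2 : qpure a2 /\ a2 <> Quat 0 0 0 0)
  (h12 : qval v pi Delta (qscale 2 a1) <= qval v pi Delta a2)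
  (hN : exists c : k, c != 0 /\ qnorm pi Delta a2 = qnorm pi Delta a1 * c ^+ 2)
  (t : int)
  (ht : qval v pi Delta (qscale (pi ^ t) qone) = qval v pi Delta a2 - qval v pi Delta a1)
  (S : seq k)
  (hS : reps_mod v pi (t + 6 * v 2) S) :
  (exists r : quat k, in_OD v pi Delta r /\ kstar v pi Delta a1 t r) <->
  (exists s0 s1 s2 s3 : k, [/\ s0 \in S, s1 \in S, s2 \in S & s3 \in S] /\
      kstar v pi Delta a1 t (lattice_elt pi Delta s0 s1 s2 s3)).
Proof.
move: hk => [pchar0 [vM [vA [_ [vC [_ v2pos]]]]]].
have two0 : (2:k) != 0 by have := pchar0 2%N; rewrite !inE /= => ->.
case: hpi => pi0 vpi. case: hdelta => d0 vd.
case: ha1 => a0 anz.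
have na := @Na0 k v vM vA vC v2pos two0 pi delta Delta pi0 vpi d0 vd hDelta hDelta_nsq a1 anz.
have t1 : 1 <= t.
  move: h12 ht. rewrite /qval.
  have -> : qnorm pi Delta (qscale 2 a1) = 4 * qnorm pi Delta a1.
    by rewrite /qnorm /qscale /=; ring.
  have -> : qnorm pi Delta (qscale (pi ^ t) qone) = pi ^ t * pi ^ t.
    by rewrite /qnorm /qscale /qone /=; ring.
  move=> h1 h2.
  have e4 : (4:k) = 2 * 2 by rewrite -natrM.
  have f0 : (4:k) != 0 by rewrite e4 mulf_neq0.
  have pt0 : pi ^ t != 0 by rewrite expfz_neq0.
  rewrite (vM _ _ pt0 pt0) (@vexpz k v vM v2pos pi delta pi0 vpi vd t) in h2.
  rewrite (vM _ _ f0 na) (@v4 k v vM v2pos two0) in h1.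
  move: h1 h2. set e := v 2. move=> h1 h2. lia.
exact: (@main_equiv k v vM vA vC v2pos two0 pi delta Delta pi0 vpi d0 vd hDelta hDelta_nsq a1 a0 anz t S t1 hS).
Qed.
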